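(* Suppose that $2\le n_0<\infty$ and that $S$ is submultiplicative on $[1,n_0]$. Then for every $M>0$ there exist $N_0>n_0$ and an extension of $S$ to $[1,N_0]$ which is submultiplicative on $[1,N_0]$ and satisfies $S(N_0)>M$.
   Context: Let $2\le n_0\le\infty$ and let $S$ be a real-valued function on $[1,n_0]$ (on $[1,\infty)$ if $n_0=\infty$). $S$ is called submultiplicative on $[1,n_0]$ if: (a) $S$ is piecewise-linear, continuous, strictly increasing and concave; (b) $S(x)=x$ for $1\le x\le 2$; (c) $S(xy)\le S(x)S(y)$ for all $x,y$ with $1\le x,y,xy\le n_0$. *)

(* Defs.v *)
From Stdlib Require Import Reals.
Open Scope R_scope.

Definition piecewise_linear_on (a b : R) (f : R -> R) : Prop :=
  exists (n : nat) (t : nat -> R),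
    t 0%nat = a /\ t n = b /\
    (forall i : nat, (i < n)%nat -> t i < t (S i)) /\
    (forall i : nat, (i < n)%nat ->
       exists c d : R, forall x, t i <= x <= t (S i) -> f x = c * x + d).

Definition continuous_on (a b : R) (f : R -> R) : Prop :=
  forall x, a <= x <= b -> forall eps, 0 < eps ->
    exists delta, 0 < delta /\
      forall y, a <= y <= b -> Rabs (y - x) < delta -> Rabs (f y - f x) < eps.

Definition strictly_increasing_on (a b : R) (f : R -> R) : Prop :=
  forall x y, a <= x <= b -> a <= y <= b -> x < y -> f x < f y.

Definition concave_on (a b : R) (f : R -> R) : Prop :=
  forall x y t, a <= x <= b -> a <= y <= b -> 0 <= t <= 1 ->
    t * f x + (1 - t) * f y <= f (t * x + (1 - t) * y).

Definition submultiplicative_on (n0 : R) (S : R -> R) : Prop :=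
  piecewise_linear_on 1 n0 S /\
  continuous_on 1 n0 S /\
  strictly_increasing_on 1 n0 S /\
  concave_on 1 n0 S /\
  (forall x, 1 <= x <= 2 -> S x = x) /\
  (forall x y, 1 <= x -> 1 <= y -> x * y <= n0 -> S (x * y) <= S x * S y).

(* Main.v *)
Require Import Defs.
From Stdlib Require Import Reals Lra Lia Psatz ZArith.
Open Scope R_scope.

Lemma nat_unbounded (B : R) : exists n : nat, B < INR n.
Proof.
  destruct (archimed B) as [H1 _].
  destruct (Z_le_gt_dec (up B) 0) as [Hz|Hz].
  - exists 0%nat. simpl. apply IZR_le in Hz. lra.
  - exists (Z.to_nat (up B)). rewrite INR_IZR_INZ, Z2Nat.id by lia. lra.
Qed.

Lemma bernoulli (q : R) (n : nat) : 1 <= q -> 1 + INR n * (q - 1) <= q ^ n.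
Proof.
  intro Hq. induction n as [|n IH].
  - simpl. lra.
  - rewrite S_INR. simpl.
    assert (1 <= q ^ n) by (apply pow_R1_Rle; lra).
    nra.
Qed.

Lemma pow_unbounded (q B : R) : 1 < q -> exists n : nat, B < q ^ n.
Proof.
  intro Hq. destruct (nat_unbounded (B / (q - 1))) as [n Hn].
  exists n. pose proof (bernoulli q n ltac:(lra)).
  assert (B < INR n * (q - 1)).
  { apply (Rmult_lt_compat_r (q - 1)) in Hn; [|lra].
    unfold Rdiv in Hn. rewrite Rmult_assoc, Rinv_l in Hn by lra. lra. }
  lra.
Qed.

Lemma pow_le_small (e : R) (k m : nat) : 0 <= e <= 1 -> (k <= m)%nat -> e ^ m <= e ^ k.
Proof.
  intros He Hkm. replace m with (k + (m - k))%nat by lia.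
  rewrite pow_add.
  assert (0 <= e ^ k) by (apply pow_le; lra).
  assert (e ^ (m - k) <= 1) by (rewrite <- (pow1 (m - k)); apply pow_incr; lra).
  assert (0 <= e ^ (m - k)) by (apply pow_le; lra).
  nra.
Qed.

Inductive pl : R -> R -> (R -> R) -> Prop :=
| pl_aff a b f c d : a < b -> (forall x, a <= x <= b -> f x = c * x + d) -> pl a b f
| pl_cat a b e f : pl a b f -> pl b e f -> pl a e f.

Lemma pl_lt a b f : pl a b f -> a < b.
Proof. induction 1; lra. Qed.

Lemma pl_ext a b f g : pl a b f -> (forall x, a <= x <= b -> f x = g x) -> pl a b g.
Proof.
  intros H; revert g; induction H as [a b f c d Hab Hf|a b e f H1 IH1 H2 IH2]; intros g Hg.
  - apply pl_aff with c d; auto. intros x Hx. rewrite <- Hg by auto. auto.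
  - pose proof (pl_lt _ _ _ H1). pose proof (pl_lt _ _ _ H2).
    apply pl_cat with b.
    + apply IH1. intros x Hx. apply Hg. lra.
    + apply IH2. intros x Hx. apply Hg. lra.
Qed.

Lemma pl_of_def a f : forall n t, (1 <= n)%nat ->
  (forall i : nat, (i < n)%nat -> t i < t (S i)) ->
  (forall i : nat, (i < n)%nat ->
       exists c d : R, forall x, t i <= x <= t (S i) -> f x = c * x + d) ->
  t 0%nat = a -> pl a (t n) f.
Proof.
  induction n as [|n IH]; intros t Hn Hinc Haff H0; [lia|].
  destruct n as [|n].
  - destruct (Haff 0%nat ltac:(lia)) as [c [d Hcd]].
    rewrite <- H0. apply pl_aff with c d; auto.
  - apply pl_cat with (t (S n)).
    + apply IH; [lia| |  |auto]; intros i Hi; [apply Hinc|apply Haff]; lia.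
    + destruct (Haff (S n) ltac:(lia)) as [c [d Hcd]].
      apply pl_aff with c d; auto.
Qed.

Lemma def_of_pl a b f : pl a b f -> piecewise_linear_on a b f.
Proof.
  induction 1 as [a b f c d Hab Hf|a b e f H1 IH1 H2 IH2].
  - exists 1%nat, (fun i => match i with 0%nat => a | _ => b end).
    repeat split; auto.
    + intros i Hi. destruct i; [lra|lia].
    + intros i Hi. destruct i; [|lia]. exists c, d. auto.
  - destruct IH1 as [n1 [t1 [A1 [B1 [C1 D1]]]]].
    destruct IH2 as [n2 [t2 [A2 [B2 [C2 D2]]]]].
    exists (n1 + n2)%nat,
      (fun i => if Nat.leb i n1 then t1 i else t2 (i - n1)%nat).
    split; [|split; [|split]].
    + simpl. auto.
    + destruct (Nat.leb (n1 + n2) n1) eqn:E.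
      * apply Nat.leb_le in E. assert (n2 = 0%nat) by lia. subst n2.
        rewrite Nat.add_0_r. rewrite B1, <- B2, A2. auto.
      * replace (n1 + n2 - n1)%nat with n2 by lia. auto.
    + intros i Hi.
      destruct (Nat.leb i n1) eqn:E1; destruct (Nat.leb (S i) n1) eqn:E2.
      * apply C1. apply Nat.leb_le in E2. lia.
      * apply Nat.leb_le in E1. apply Nat.leb_gt in E2.
        assert (i = n1) by lia. subst i.
        replace (S n1 - n1)%nat with (S 0) by lia.
        rewrite B1, <- A2. apply C2. lia.
      * apply Nat.leb_gt in E1. apply Nat.leb_le in E2. lia.
      * apply Nat.leb_gt in E1.
        replace (S i - n1)%nat with (S (i - n1)) by lia. apply C2. lia.
    + intros i Hi.
      destruct (Nat.leb i n1) eqn:E1; destruct (Nat.leb (S i) n1) eqn:E2.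
      * apply D1. apply Nat.leb_le in E2. lia.
      * apply Nat.leb_le in E1. apply Nat.leb_gt in E2.
        assert (i = n1) by lia. subst i.
        replace (S n1 - n1)%nat with (S 0) by lia.
        rewrite B1, <- A2. apply D2. lia.
      * apply Nat.leb_gt in E1. apply Nat.leb_le in E2. lia.
      * apply Nat.leb_gt in E1.
        replace (S i - n1)%nat with (S (i - n1)) by lia. apply D2. lia.
Qed.

Lemma pl_min2 a b c1 d1 c d : a < b ->
  pl a b (fun x => Rmin (c1 * x + d1) (c * x + d)).
Proof.
  intro Hab.
  set (h := fun x => (c1 - c) * x + (d1 - d)).
  assert (Hlin : forall x, a <= x <= b -> h x * (b - a) = (b - x) * h a + (x - a) * h b).
  { intros x Hx. unfold h. ring. }
  destruct (Rle_dec (h a) 0) as [Ha|Ha]; destruct (Rle_dec (h b) 0) as [Hb|Hb].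
  - apply pl_aff with c1 d1; auto. intros x Hx. rewrite Rmin_left; auto.
    assert (h x <= 0).
    { pose proof (Hlin x Hx). assert (h x * (b - a) <= 0) by nra. nra. }
    unfold h in H. lra.
  -
    assert (Hc : c1 - c > 0) by (unfold h in *; nra).
    set (z := (d - d1) / (c1 - c)).
    assert (Hz : forall x, h x = (c1 - c) * (x - z)).
    { intro x. unfold h, z. field. lra. }
    assert (a <= z). { pose proof (Hz a). nra. }
    assert (z < b). { pose proof (Hz b). nra. }
    destruct (Req_dec a z) as [Eaz|Eaz].
    + apply pl_aff with c d; auto. intros x Hx. rewrite Rmin_right; auto.
      pose proof (Hz x). unfold h in H1. nra.
    + apply pl_cat with z.
      * apply pl_aff with c1 d1; [lra|]. intros x Hx. rewrite Rmin_left; auto.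
        pose proof (Hz x). unfold h in H1. nra.
      * apply pl_aff with c d; [lra|]. intros x Hx. rewrite Rmin_right; auto.
        pose proof (Hz x). unfold h in H1. nra.
  - assert (Hc : c1 - c < 0) by (unfold h in *; nra).
    set (z := (d - d1) / (c1 - c)).
    assert (Hz : forall x, h x = (c1 - c) * (x - z)).
    { intro x. unfold h, z. field. lra. }
    assert (a < z). { pose proof (Hz a). nra. }
    assert (z <= b). { pose proof (Hz b). nra. }
    destruct (Req_dec z b) as [Ezb|Ezb].
    + apply pl_aff with c d; auto. intros x Hx. rewrite Rmin_right; auto.
      pose proof (Hz x). unfold h in H1. nra.
    + apply pl_cat with z.
      * apply pl_aff with c d; [lra|]. intros x Hx. rewrite Rmin_right; auto.
        pose proof (Hz x). unfold h in H1. nra.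
      * apply pl_aff with c1 d1; [lra|]. intros x Hx. rewrite Rmin_left; auto.
        pose proof (Hz x). unfold h in H1. nra.
  - apply pl_aff with c d; auto. intros x Hx. rewrite Rmin_right; auto.
    assert (h x >= 0).
    { pose proof (Hlin x Hx). assert (h x * (b - a) >= 0) by nra. nra. }
    unfold h in H. lra.
Qed.

Lemma pl_min a b f c d : pl a b f -> pl a b (fun x => Rmin (f x) (c * x + d)).
Proof.
  induction 1 as [a b f c1 d1 Hab Hf|a b e f H1 IH1 H2 IH2].
  - apply pl_ext with (fun x => Rmin (c1 * x + d1) (c * x + d)).
    + apply pl_min2; auto.
    + intros x Hx. rewrite Hf; auto.
  - apply pl_cat with b; auto.
Qed.

Lemma concave3 a b f u v w : concave_on a b f -> a <= u -> u < v -> v < w -> w <= b ->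
  (v - u) * (f w - f u) <= (f v - f u) * (w - u).
Proof.
  intros Hc H1 H2 H3 H4.
  set (t := (w - v) / (w - u)).
  assert (Ht : t * (w - u) = w - v) by (unfold t; field; lra).
  assert (Hv : t * u + (1 - t) * w = v) by nra.
  assert (0 <= t <= 1).
  { split; apply (Rmult_le_reg_r (w - u)); nra. }
  pose proof (Hc u w t ltac:(lra) ltac:(lra) H) as Hk. rewrite Hv in Hk.
  nra.
Qed.

Lemma chord_lower (n0 p c d : R) (S : R -> R) :
  concave_on 1 n0 S -> 1 <= p -> p < n0 ->
  (forall x, p <= x <= n0 -> S x = c * x + d) ->
  forall u v, 1 <= u -> u <= v -> v <= n0 -> c * (v - u) <= S v - S u.
Proof.
  intros Hc Hp Hpn Hl.
  assert (Key : forall u, 1 <= u -> u < p -> c * (p - u) <= S p - S u).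
  { intros u Hu Hup.
    pose proof (concave3 _ _ _ u p n0 Hc Hu Hup Hpn ltac:(lra)) as K.
    rewrite (Hl n0) in K by lra. rewrite (Hl p) in K |- * by lra.
    nra. }
  intros u v Hu Huv Hv.
  destruct (Rle_dec p u).
  - rewrite (Hl u), (Hl v) by lra. lra.
  - destruct (Rle_dec p v).
    + pose proof (Key u Hu ltac:(lra)). rewrite (Hl v) by lra. rewrite (Hl p) in H by lra. nra.
    + destruct (Req_dec u v) as [E|E]; [subst; lra|].
      pose proof (concave3 _ _ _ u v p Hc Hu ltac:(lra) ltac:(lra) ltac:(lra)) as K.
      pose proof (Key u Hu ltac:(lra)).
      assert ((v - u) * (c * (p - u)) <= (S v - S u) * (p - u)) by nra.
      nra.
Qed.

Lemma glue_core (a m b cc : R) (f g h : R -> R) :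
  concave_on a m f ->
  (forall x, a <= x <= m -> h x = f x) -> (forall x, m <= x <= b -> h x = g x) ->
  (forall x, a <= x <= m -> f x <= f m + cc * (x - m)) ->
  (forall x, m <= x <= b -> g x <= f m + cc * (x - m)) ->
  concave_on m b g ->
  forall x y t, a <= x -> x < m -> m < y -> y <= b -> 0 <= t <= 1 ->
    t * h x + (1 - t) * h y <= h (t * x + (1 - t) * y).
Proof.
  intros Hf Hhf Hhg Hfl Hgl Hg x y t Hx Hxm Hmy Hy Ht.
  set (z := t * x + (1 - t) * y).
  rewrite (Hhf x), (Hhg y) by lra.
  assert (Hz1 : x <= z) by (unfold z; nra).
  assert (Hz2 : z <= y) by (unfold z; nra).
  pose proof (Hfl x ltac:(lra)) as Fx. pose proof (Hgl y ltac:(lra)) as Gy.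
  destruct (Rle_dec z m) as [Hzm|Hzm].
  - rewrite Hhf by lra.
    set (s := (m - z) / (m - x)).
    assert (Hs : s * (m - x) = m - z) by (unfold s; field; lra).
    assert (0 <= s <= 1) by (split; apply (Rmult_le_reg_r (m - x)); nra).
    assert (Hzs : s * x + (1 - s) * m = z) by nra.
    pose proof (Hf x m s ltac:(lra) ltac:(lra) H) as K. rewrite Hzs in K.
    assert (Hts : (t - s) * (m - x) = (1 - t) * (y - m)) by (unfold z in Hs; nra).
    assert (t - s >= 0) by nra.
    assert (P1 : (t - s) * f x <= (t - s) * (f m + cc * (x - m))) by (apply Rmult_le_compat_l; lra).
    assert (P2 : (1 - t) * g y <= (1 - t) * (f m + cc * (y - m))) by (apply Rmult_le_compat_l; lra).
    assert (E : cc * ((t - s) * (m - x)) = cc * ((1 - t) * (y - m))) by (rewrite Hts; ring).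
    nra.
  - rewrite Hhg by lra.
    set (s := (z - m) / (y - m)).
    assert (Hs : s * (y - m) = z - m) by (unfold s; field; lra).
    assert (0 <= s <= 1) by (split; apply (Rmult_le_reg_r (y - m)); nra).
    assert (Hzs : (1 - s) * m + s * y = z) by nra.
    pose proof (Hg m y (1 - s) ltac:(lra) ltac:(lra) ltac:(lra)) as K.
    replace ((1 - s) * m + (1 - (1 - s)) * y) with z in K by lra.
    assert (Hhm : g m = f m) by (rewrite <- Hhf, <- Hhg; lra).
    assert (Hts : ((1 - t) - s) * (y - m) = t * (m - x)) by (unfold z in Hs; nra).
    assert ((1 - t) - s >= 0) by nra.
    assert (P1 : ((1 - t) - s) * g y <= ((1 - t) - s) * (f m + cc * (y - m))) by (apply Rmult_le_compat_l; lra).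
    assert (P2 : t * f x <= t * (f m + cc * (x - m))) by (apply Rmult_le_compat_l; lra).
    assert (E : cc * (((1 - t) - s) * (y - m)) = cc * (t * (m - x))) by (rewrite Hts; ring).
    nra.
Qed.

Lemma glue_concave (a m b cc : R) (f g h : R -> R) :
  a <= m -> m <= b ->
  concave_on a m f -> concave_on m b g ->
  (forall x, a <= x <= m -> h x = f x) -> (forall x, m <= x <= b -> h x = g x) ->
  (forall x, a <= x <= m -> f x <= f m + cc * (x - m)) ->
  (forall x, m <= x <= b -> g x <= f m + cc * (x - m)) ->
  concave_on a b h.
Proof.
  intros Ham Hmb Hf Hg Hhf Hhg Hfl Hgl x y t Hx Hy Ht.
  destruct (Rle_dec x m); destruct (Rle_dec y m).
  - rewrite !Hhf by (try lra; split; nra). apply Hf; lra.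
  - destruct (Req_dec x m) as [E|E].
    + subst x. rewrite !Hhg by (try lra; split; nra). apply Hg; lra.
    + apply (glue_core a m b cc f g h); auto; lra.
  - destruct (Req_dec y m) as [E|E].
    + subst y. rewrite !Hhg by (try lra; split; nra). apply Hg; lra.
    + pose proof (glue_core a m b cc f g h Hf Hhf Hhg Hfl Hgl Hg y x (1 - t)
        ltac:(lra) ltac:(lra) ltac:(lra) ltac:(lra) ltac:(lra)) as K.
      replace ((1 - t) * y + (1 - (1 - t)) * x) with (t * x + (1 - t) * y) in K by ring.
      lra.
  - rewrite !Hhg by (try lra; split; nra). apply Hg; lra.
Qed.

Lemma glue_cont (a m b : R) (f g h : R -> R) :
  continuous_on a m f -> continuous_on m b g ->
  (forall x, a <= x <= m -> h x = f x) -> (forall x, m <= x <= b -> h x = g x) ->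
  a <= m -> m <= b ->
  continuous_on a b h.
Proof.
  intros Hf Hg Hhf Hhg Ham Hmb x Hx eps Heps.
  destruct (Rle_dec x m).
  - destruct (Hf x ltac:(lra) (eps/2) ltac:(lra)) as [d1 [Hd1 K1]].
    destruct (Hg m ltac:(lra) (eps/2) ltac:(lra)) as [d2 [Hd2 K2]].
    exists (Rmin d1 d2). split; [apply Rmin_pos; auto|].
    intros y Hy Hyx.
    pose proof (Rmin_l d1 d2). pose proof (Rmin_r d1 d2).
    destruct (Rle_dec y m).
    + rewrite !Hhf by lra. assert (Rabs (f y - f x) < eps/2) by (apply K1; lra). lra.
    + rewrite Hhg by lra. rewrite Hhf by lra.
      assert (Hm : h m = f m) by (apply Hhf; lra).
      assert (Hm' : h m = g m) by (apply Hhg; lra).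
      assert (Rabs (y - m) < d2) by (rewrite Rabs_right by lra; pose proof (Rle_abs (y - x)); lra).
      assert (Rabs (m - x) < d1) by (rewrite Rabs_right by lra; pose proof (Rle_abs (y - x)); lra).
      pose proof (K2 y ltac:(lra) H1). pose proof (K1 m ltac:(lra) H2).
      rewrite Hm in Hm'. rewrite <- Hm' in H3.
      pose proof (Rabs_triang (g y - f m) (f m - f x)).
      replace (g y - f m + (f m - f x)) with (g y - f x) in H5 by ring. lra.
  - destruct (Hg x ltac:(lra) (eps/2) ltac:(lra)) as [d1 [Hd1 K1]].
    destruct (Hf m ltac:(lra) (eps/2) ltac:(lra)) as [d2 [Hd2 K2]].
    exists (Rmin d1 d2). split; [apply Rmin_pos; auto|].
    intros y Hy Hyx.
    pose proof (Rmin_l d1 d2). pose proof (Rmin_r d1 d2).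
    destruct (Rle_dec m y).
    + rewrite !Hhg by lra. assert (Rabs (g y - g x) < eps/2) by (apply K1; lra). lra.
    + rewrite Hhf by lra. rewrite Hhg by lra.
      assert (Hm : h m = f m) by (apply Hhf; lra).
      assert (Hm' : h m = g m) by (apply Hhg; lra).
      assert (Rabs (y - m) < d2) by (rewrite Rabs_left by lra; pose proof (Rle_abs (-(y - x))); rewrite Rabs_Ropp in *; lra).
      assert (Rabs (m - x) < d1) by (rewrite Rabs_left by lra; pose proof (Rle_abs (-(y - x))); rewrite Rabs_Ropp in *; lra).
      pose proof (K2 y ltac:(lra) H1). pose proof (K1 m ltac:(lra) H2).
      rewrite Hm in Hm'. rewrite Hm' in H3.
      pose proof (Rabs_triang (f y - g m) (g m - g x)).
      replace (f y - g m + (g m - g x)) with (f y - g x) in H5 by ring. lra.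
Qed.

Definition line (A q e : R) (k : nat) (z : R) : R := A * q ^ k + e ^ k * z.

Fixpoint gm (A q e : R) (K : nat) (z : R) : R :=
  match K with
  | O => line A q e 1 z
  | S K' => Rmin (gm A q e K' z) (line A q e (K' + 2) z)
  end.

Lemma gm_attain A q e K z : exists k, (1 <= k <= K + 1)%nat /\ gm A q e K z = line A q e k z.
Proof.
  induction K as [|K IH]; simpl.
  - exists 1%nat. split; auto; lia.
  - destruct IH as [k [Hk E]]. unfold Rmin.
    destruct (Rle_dec (gm A q e K z) (line A q e (K + 2) z)).
    + exists k. split; [lia|auto].
    + exists (K + 2)%nat. split; [lia|auto].
Qed.

Lemma gm_le A q e K z k : (1 <= k <= K + 1)%nat -> gm A q e K z <= line A q e k z.
Proof.
  induction K as [|K IH]; intros Hk; simpl.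
  - assert (k = 1%nat) by lia. subst. lra.
  - destruct (Nat.eq_dec k (K + 2)) as [E|E].
    + subst. apply Rmin_r.
    + eapply Rle_trans; [apply Rmin_l|]. apply IH. lia.
Qed.

Lemma gm_pl A q e K a b : a < b -> pl a b (gm A q e K).
Proof.
  intro Hab. induction K as [|K IH]; simpl.
  - apply pl_aff with (e ^ 1) (A * q ^ 1); auto. intros x _. unfold line. ring.
  - apply pl_ext with (fun x => Rmin (gm A q e K x) (e ^ (K + 2) * x + A * q ^ (K + 2))).
    + apply pl_min; auto.
    + intros x _. unfold line. f_equal. ring.
Qed.

Lemma incr_from0 (n : nat) (t : nat -> R) :
  (forall i : nat, (i < n)%nat -> t i < t (S i)) -> forall i, (i <= n)%nat -> t 0%nat <= t i.
Proof.
  intros H i. induction i as [|i IH]; intros Hi; [lra|].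
  pose proof (H i ltac:(lia)). pose proof (IH ltac:(lia)). lra.
Qed.

Theorem lemma2p5 (n0 : R) (S : R -> R) :
  2 <= n0 -> submultiplicative_on n0 S ->
  forall M : R, 0 < M ->
    exists (N0 : R) (T : R -> R),
      n0 < N0 /\
      (forall x, 1 <= x <= n0 -> T x = S x) /\
      submultiplicative_on N0 T /\
      M < T N0.
Proof.
  intros Hn0 [Hpl [Hcont [Hinc [Hconc [Hid Hsub]]]]] M HM.
  destruct Hpl as [n [t [Ht0 [Htn [Htinc Htaff]]]]].
  assert (Hn : (1 <= n)%nat).
  { destruct n; [rewrite Ht0 in Htn; lra|lia]. }
  assert (HplS : pl 1 n0 S).
  { rewrite <- Htn. apply (pl_of_def 1 S n t); auto. }
  destruct (Htaff (n - 1)%nat ltac:(lia)) as [c [d Hcd]].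
  replace (Datatypes.S (n - 1)) with n in Hcd by lia.
  set (p := t (n - 1)%nat) in *.
  rewrite Htn in Hcd.
  assert (Hp1 : 1 <= p).
  { rewrite <- Ht0. apply (incr_from0 n t Htinc). lia. }
  assert (Hpn : p < n0).
  { rewrite <- Htn. unfold p. pose proof (Htinc (n - 1)%nat ltac:(lia)).
    replace (Datatypes.S (n - 1)) with n in H by lia. auto. }
  assert (Hc : 0 < c).
  { pose proof (Hinc p n0 ltac:(lra) ltac:(lra) Hpn).
    rewrite (Hcd p), (Hcd n0) in H by lra. nra. }
  assert (Hchord := chord_lower n0 p c d S Hconc Hp1 Hpn Hcd).
  set (Sn := S n0).
  assert (HS1 : forall x, 1 <= x <= n0 -> 1 <= S x).
  { intros x Hx. rewrite <- (Hid 1) by lra. pose proof (Hchord 1 x ltac:(lra) ltac:(lra) ltac:(lra)). nra. }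
  assert (HS2 : forall x, 2 <= x <= n0 -> 2 <= S x).
  { intros x Hx. rewrite <- (Hid 2) at 1 by lra. pose proof (Hchord 2 x ltac:(lra) ltac:(lra) ltac:(lra)). nra. }
  assert (HSn : 2 <= Sn) by (apply HS2; lra).
  set (r := Rmin c (1/2)).
  assert (Hr1 : r <= c) by apply Rmin_l.
  assert (Hr2 : r <= 1/2) by apply Rmin_r.
  assert (Hr0 : 0 < r) by (unfold r; apply Rmin_pos; lra).
  set (e := r / n0).
  assert (Hen : e * n0 = r) by (unfold e; field; lra).
  assert (He0 : 0 < e) by (unfold e; apply Rdiv_lt_0_compat; lra).
  assert (He1 : e <= 1/4) by nra.
  assert (Hec : e <= c) by nra.
  set (q := 3/2).
  set (A := (Sn - e * n0) / q).
  assert (HAq : A * q = Sn - e * n0) by (unfold A, q; field).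
  assert (HA1 : 1 <= A) by (unfold q in HAq; lra).
  destruct (pow_unbounded q (M / A) ltac:(unfold q; lra)) as [k0 Hk0].
  assert (HAk0 : M < A * q ^ k0).
  { apply (Rmult_lt_compat_l A) in Hk0; [|lra].
    unfold Rdiv in Hk0. rewrite <- Rmult_assoc, (Rmult_comm A M), Rmult_assoc, Rinv_r in Hk0 by lra. lra. }
  assert (Hek0 : 0 < e ^ k0) by (apply pow_lt; lra).
  set (N := n0 + 1 + M / e ^ k0).
  assert (HeN : M < e ^ k0 * N).
  { unfold N. assert (e ^ k0 * (M / e ^ k0) = M) by (field; lra).
    assert (0 <= e ^ k0 * (n0 + 1)) by nra. nra. }
  assert (HMe : 0 < M / e ^ k0) by (apply Rdiv_lt_0_compat; lra).
  assert (HnN : n0 < N) by (unfold N; lra).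
  destruct (pow_unbounded q ((A * q + e * N) / A) ltac:(unfold q; lra)) as [K0 HK0].
  assert (HAK0 : A * q + e * N < A * q ^ K0).
  { apply (Rmult_lt_compat_l A) in HK0; [|lra].
    replace (A * ((A * q + e * N) / A)) with (A * q + e * N) in HK0 by (field; lra). lra. }
  set (G := gm A q e K0).
  assert (Hline1 : forall z, line A q e 1 z = Sn + e * (z - n0)).
  { intro z. unfold line. simpl. rewrite !Rmult_1_r. lra. }
  assert (Hqpos : forall k, 0 < q ^ k) by (intro k; apply pow_lt; unfold q; lra).
  assert (Hepos : forall k, 0 < e ^ k) by (intro k; apply pow_lt; lra).
  assert (Hele1 : forall k, e ^ k <= 1).
  { intro k. rewrite <- (pow1 k). apply pow_incr. lra. }
  assert (Gle : forall k z, (1 <= k)%nat -> 0 <= z <= N -> G z <= line A q e k z).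
  { intros k z Hk Hz. destruct (le_lt_dec k (K0 + 1)) as [Hk2|Hk2].
    - apply gm_le. lia.
    - assert (q ^ K0 <= q ^ k) by (apply Rle_pow; unfold q; lra || lia; lia).
      assert (G z <= line A q e 1 z) by (apply gm_le; lia).
      rewrite Hline1 in H0. unfold line.
      pose proof (Hepos k). assert (0 <= e ^ k * z) by nra.
      assert (e * (z - n0) <= e * N) by nra. nra. }
  assert (Gatt : forall z, exists k, (1 <= k)%nat /\ G z = line A q e k z).
  { intro z. destruct (gm_attain A q e K0 z) as [k [Hk E]]. exists k. split; [lia|auto]. }
  assert (GleAll : forall z k, (1 <= k <= K0 + 1)%nat -> G z <= line A q e k z).
  { intros. apply gm_le. auto. }
  assert (Gatt' : forall z, exists k, (1 <= k <= K0 + 1)%nat /\ G z = line A q e k z).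
  { intro z. apply gm_attain. }
  assert (Gn0 : G n0 = Sn).
  { destruct (Gatt' n0) as [k [Hk E]].
    assert (G n0 <= line A q e 1 n0) by (apply GleAll; lia). rewrite Hline1 in H.
    assert (Sn <= line A q e k n0).
    { destruct (Nat.eq_dec k 1) as [->|Hk1]; [rewrite Hline1; lra|].
      assert (q ^ 2 <= q ^ k) by (apply Rle_pow; [unfold q; lra|lia]).
      unfold line. assert (q ^ 2 = q * q) by ring. pose proof (Hepos k).
      assert (0 <= e ^ k * n0) by nra.
      assert (A * q ^ 2 <= A * q ^ k) by nra.
      unfold q in *. nra. }
    lra. }
  set (T := fun x => if Rle_dec x n0 then S x else G x).
  assert (TS : forall x, x <= n0 -> T x = S x).
  { intros x Hx. unfold T. destruct (Rle_dec x n0); [auto|lra]. }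
  assert (TG : forall x, n0 <= x -> T x = G x).
  { intros x Hx. unfold T. destruct (Rle_dec x n0); [|auto].
    assert (x = n0) by lra. subst x. rewrite Gn0. auto. }

  assert (GLip : forall x y, Rabs (G y - G x) <= Rabs (y - x)).
  { intros x y. destruct (Gatt' x) as [kx [Hkx Ex]]. destruct (Gatt' y) as [ky [Hky Ey]].
    pose proof (GleAll y kx Hkx). pose proof (GleAll x ky Hky).
    unfold line in *. pose proof (Hepos kx). pose proof (Hepos ky).
    pose proof (Hele1 kx). pose proof (Hele1 ky).
    destruct (Rle_dec x y).
    - rewrite (Rabs_right (y - x)) by lra.
      assert (G y - G x <= e ^ kx * (y - x)) by lra.
      assert (G x - G y <= e ^ ky * (x - y)) by lra.
      apply Rabs_le. nra.
    - rewrite (Rabs_left (y - x)) by lra.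
      assert (G y - G x <= e ^ kx * (y - x)) by lra.
      assert (G x - G y <= e ^ ky * (x - y)) by lra.
      apply Rabs_le. nra. }
  assert (Gcont : continuous_on n0 N G).
  { intros x Hx eps Heps. exists eps. split; auto. intros y Hy Hyx.
    pose proof (GLip x y). lra. }
  assert (Ginc : forall x y, x < y -> G x < G y).
  { intros x y Hxy. destruct (Gatt' y) as [k [Hk E]].
    pose proof (GleAll x k Hk). unfold line in *. pose proof (Hepos k). nra. }
  assert (Gconc : concave_on n0 N G).
  { intros x y tt Hx Hy Htt. destruct (Gatt' (tt * x + (1 - tt) * y)) as [k [Hk E]].
    rewrite E. pose proof (GleAll x k Hk). pose proof (GleAll y k Hk).
    unfold line in *.
    assert (tt * G x <= tt * (A * q ^ k + e ^ k * x)) by (apply Rmult_le_compat_l; lra).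
    assert ((1 - tt) * G y <= (1 - tt) * (A * q ^ k + e ^ k * y)) by (apply Rmult_le_compat_l; lra).
    nra. }
  assert (Mixed : forall x y, 1 <= x <= n0 -> n0 < y -> x * y <= N ->
             T (x * y) <= T x * T y).
  { intros x y Hx Hy Hxy.
    rewrite (TS x) by lra. rewrite (TG y) by lra. rewrite (TG (x * y)) by nra.
    destruct (Gatt' y) as [k [Hk E]]. rewrite E. unfold line.
    pose proof (Hqpos k). pose proof (Hepos k).
    destruct (Rle_dec x 2).
    - rewrite Hid by lra.
      assert (G (x * y) <= line A q e k (x * y)) by (apply Gle; [lia|nra]).
      unfold line in H1.
      assert (0 <= A * q ^ k) by (apply Rmult_le_pos; lra).
      assert (0 <= (x - 1) * (A * q ^ k)) by (apply Rmult_le_pos; lra).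
      assert (A * q ^ k <= x * (A * q ^ k)) by nra.
      replace (x * (A * q ^ k + e ^ k * y)) with (x * (A * q ^ k) + e ^ k * (x * y)) by ring. lra.
    - assert (G (x * y) <= line A q e (k + 1) (x * y)) by (apply Gle; [lia|nra]).
      unfold line in H1. rewrite !pow_add in H1. simpl in H1. rewrite !Rmult_1_r in H1.
      pose proof (HS2 x ltac:(lra)).
      assert (e * x <= S x) by nra.
      assert (q * (A * q ^ k) <= S x * (A * q ^ k)) by (apply Rmult_le_compat_r; [apply Rmult_le_pos; lra | unfold q; lra]).
      assert (e * x * (e ^ k * y) <= S x * (e ^ k * y)) by (apply Rmult_le_compat_r; [apply Rmult_le_pos; lra|lra]).
      replace (S x * (A * q ^ k + e ^ k * y)) with (S x * (A * q ^ k) + S x * (e ^ k * y)) by ring.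
      replace (A * (q ^ k * q) + e ^ k * e * (x * y)) with (q * (A * q ^ k) + e * x * (e ^ k * y)) in H1 by ring.
      lra. }
  exists N, T. split; [auto|]. split; [intros x Hx; apply TS; lra|]. split.
  - split; [|split; [|split; [|split; [|split]]]].
    + apply def_of_pl. apply pl_cat with n0.
      * apply pl_ext with S; auto. intros x Hx. rewrite TS; lra.
      * apply pl_ext with G; [apply gm_pl; auto|]. intros x Hx. rewrite TG; lra.
    + apply (glue_cont 1 n0 N S G T); auto; try lra.
      * intros x Hx. apply TS. lra.
      * intros x Hx. apply TG. lra.
    + intros x y Hx Hy Hxy. destruct (Rle_dec y n0).
      * rewrite !TS by lra. apply Hinc; lra.
      * rewrite (TG y) by lra. destruct (Rle_dec x n0).
        -- rewrite TS by lra. pose proof (Ginc n0 y ltac:(lra)).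
           assert (S x <= Sn).
           { destruct (Req_dec x n0) as [->|]; [unfold Sn; lra|]. pose proof (Hinc x n0 ltac:(lra) ltac:(lra) ltac:(lra)). unfold Sn. lra. }
           lra.
        -- rewrite TG by lra. apply Ginc; lra.
    + apply (glue_concave 1 n0 N c S G T); auto; try lra.
      * intros x Hx. apply TS. lra.
      * intros x Hx. apply TG. lra.
      * intros x Hx. pose proof (Hchord x n0 ltac:(lra) ltac:(lra) ltac:(lra)). lra.
      * intros x Hx. fold Sn. assert (G x <= line A q e 1 x) by (apply GleAll; lia).
        rewrite Hline1 in H. nra.
    + intros x Hx. rewrite TS by lra. apply Hid; lra.
    + intros x y Hx Hy Hxy.
      destruct (Rle_dec x n0); destruct (Rle_dec y n0).
      * rewrite (TS x), (TS y) by lra. destruct (Rle_dec (x * y) n0).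
        -- rewrite TS by lra. apply Hsub; lra.
        -- rewrite TG by lra.
           assert (G (x * y) <= line A q e 1 (x * y)) by (apply Gle; [lia|nra]).
           rewrite Hline1 in H.
           set (x' := n0 / y).
           assert (Hx'y : x' * y = n0) by (unfold x'; field; lra).
           assert (1 <= x') by (apply (Rmult_le_reg_r y); [lra|]; rewrite Hx'y; lra).
           assert (x' < x) by (apply (Rmult_lt_reg_r y); [lra|]; rewrite Hx'y; lra).
           pose proof (Hsub x' y ltac:(lra) ltac:(lra) ltac:(lra)) as Hs. rewrite Hx'y in Hs.
           pose proof (Hchord x' x ltac:(lra) ltac:(lra) ltac:(lra)).
           pose proof (HS1 y ltac:(lra)).
           assert (e * y <= c * S y) by nra.
           assert ((S x' + c * (x - x')) * S y <= S x * S y) by (apply Rmult_le_compat_r; lra).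
           assert ((x - x') * (e * y) <= (x - x') * (c * S y)) by (apply Rmult_le_compat_l; lra).
           unfold Sn in H. nra.
      * apply Mixed; lra.
      * rewrite (Rmult_comm x y), (Rmult_comm (T x) (T y)). apply Mixed; lra.
      * rewrite (TG x), (TG y), (TG (x * y)) by nra.
        destruct (Gatt' x) as [i [Hi Ei]]. destruct (Gatt' y) as [j [Hj Ej]].
        rewrite Ei, Ej.
        assert (G (x * y) <= line A q e (i + j) (x * y)) by (apply Gle; [lia|nra]).
        unfold line in *. rewrite !pow_add in H.
        pose proof (Hqpos i). pose proof (Hqpos j). pose proof (Hepos i). pose proof (Hepos j).
        assert (A * (q ^ i * q ^ j) <= A * A * (q ^ i * q ^ j)) by (apply Rmult_le_compat_r; nra).
        assert (0 <= A * q ^ i * (e ^ j * y)) by (apply Rmult_le_pos; nra).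
        assert (0 <= e ^ i * x * (A * q ^ j)) by (apply Rmult_le_pos; nra).
        nra.
  - rewrite TG by lra. destruct (Gatt' N) as [k [Hk E]]. rewrite E. unfold line.
    pose proof (Hqpos k). pose proof (Hepos k).
    destruct (le_lt_dec k0 k).
    + assert (q ^ k0 <= q ^ k) by (apply Rle_pow; [unfold q; lra|auto]).
      assert (0 <= e ^ k * N) by nra. nra.
    + assert (e ^ k0 <= e ^ k) by (apply pow_le_small; [lra|lia]).
      assert (0 <= A * q ^ k) by nra. nra.
Qed.
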